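(* Let $G=(V,E,c_V^G,c_E^G)$ and $H=(V,E,c_V^H,c_E^H)$ be two capacitated graphs on the same graph $(V,E)$ that differ only in the capacity of one edge $(s,t)\in E$ (all vertex capacities and all other edge capacities coincide). Assume that in the executions of Rising-Tide on $G$ and on $H$ no two vertices become saturated simultaneously, and that the dependency graphs coincide, $D_G=D_H$. Let $\mu_G,\mu_H$ be the outputs of Rising-Tide on $G$ and $H$. Then \[\sum_i\left|\Big(c_V^G(i)-\sum_j\mu_G(i,j)\Big)-\Big(c_V^H(i)-\sum_j\mu_H(i,j)\Big)\right|\le 2|c_E^G(s,t)-c_E^H(s,t)|.\]
   Context: Capacitated graphs have nonnegative vertex capacities $c_V$ and edge capacities $c_E$; edges may include self-loops, and in $\sum_j\mu(i,j)$ a self-loop at $i$ counts once. A feasible fractional matching $\mu:E\to\mathbb{R}_{\ge0}$ satisfies $\mu(e)\le c_E(e)$ and $\sum_j\mu(i,j)\le c_V(i)$. Vertex $i$ is saturated if $\sum_j\mu(i,j)=c_V(i)$; edge $e$ is saturated if $\mu(e)=c_E(e)$. Rising-Tide: set $E'=\{e\in E:c_E(e)>0\}$ and $\mu\equiv0$; while $E'\ne\emptyset$: choose the maximum $\delta\ge0$ such that $\mu+\delta\mathbf{1}_{E'}$ is feasible, set $\mu\gets\mu+\delta\mathbf{1}_{E'}$, and remove from $E'$ every edge $(i,j)$ such that $i$, $j$, or $(i,j)$ is saturated; return $\mu$. Dependency graph $D_G$: the directed graph on $V$ which, for each edge $(i,j)\in E$, contains $j\to i$ if $i$ is saturated at the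 moment $(i,j)$ is removed from $E'$ in the execution on $G$, and contains $i\to j$ if $j$ is saturated at that moment. *)

(* Defs.v *)
From mathcomp Require Import all_boot all_order all_algebra.
Set Implicit Arguments. Unset Strict Implicit. Unset Printing Implicit Defensive.
Import Order.TTheory GRing.Theory Num.Theory.
Local Open Scope ring_scope.

(* A capacitated graph on vertex set V with edge set E: each edge e has
   endpoints [ends e] (possibly a self-loop), vertex capacities cV and edge
   capacities cE, valued in an ordered field R. *)
Section RisingTide.
Variables (R : realFieldType) (V E : finType) (ends : E -> V * V).
Variables (cV : V -> R) (cE : E -> R).

Definition incident (e : E) (i : V) : bool := ((ends e).1 == i) || ((ends e).2 == i).

(* sum_j mu(i,j); a self-loop at i counts once *)
Definition load (mu : {ffun E -> R}) (i : V) : R := \sum_(e | incident e i) mu e.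

Definition vsat (mu : {ffun E -> R}) (i : V) : bool := load mu i == cV i.
Definition esat (mu : {ffun E -> R}) (e : E) : bool := mu e == cE e.

Definition degE (Ep : {set E}) (i : V) : nat := #|[set e in Ep | incident e i]|.

(* The maximum delta >= 0 such that mu + delta 1_{Ep} is feasible, written
   out explicitly (for feasible mu, nonnegative capacities, nonempty Ep):
   the minimum of the edge slacks on Ep and the vertex slacks divided by the
   number of incident edges of Ep. *)
Definition delta (mu : {ffun E -> R}) (Ep : {set E}) : R :=
  let vals := [seq cE e - mu e | e in Ep] ++
              [seq (cV i - load mu i) / (degE Ep i)%:R
                 | i in [set i | (0 < degE Ep i)%N]] in
  foldr Order.min (head 0 vals) vals.

Definition rt_state := ({ffun E -> R} * {set E})%type.

Definition rt_step (s : rt_state) : rt_state :=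
  let: (mu, Ep) := s in
  if Ep == set0 then s else
  let d := delta mu Ep in
  let mu' := [ffun e => if e \in Ep then mu e + d else mu e] in
  (mu', [set e in Ep | ~~ [|| vsat mu' (ends e).1, vsat mu' (ends e).2
                            | esat mu' e]]).

Definition rt_init : rt_state := ([ffun => 0], [set e | 0 < cE e]).

Definition rt_state_at (k : nat) : rt_state := iter k rt_step rt_init.

(* each nonempty iteration removes at least one edge, so after #|E|
   iterations Ep is empty: this is the output of Rising-Tide *)
Definition rising_tide : {ffun E -> R} := (rt_state_at #|E|).1.

Definition becomes_sat (i : V) (k : nat) : Prop :=
  vsat (rt_state_at k).1 i /\
  (match k with 0 => True | k'.+1 => ~~ vsat (rt_state_at k').1 i end).

Definition removed_at (e : E) (k : nat) : Prop :=
  e \in (rt_state_at k).2 /\ e \notin (rt_state_at k.+1).2.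

Definition dep_arc (u v : V) : Prop :=
  exists (e : E) (k : nat), removed_at e k /\
    ( ((ends e).2 = u /\ (ends e).1 = v /\ vsat (rt_state_at k.+1).1 (ends e).1)
   \/ ((ends e).1 = u /\ (ends e).2 = v /\ vsat (rt_state_at k.+1).1 (ends e).2)).

End RisingTide.

(* Main.v *)
Require Import Defs.
From mathcomp Require Import all_boot all_order all_algebra.
Set Implicit Arguments. Unset Strict Implicit. Unset Printing Implicit Defensive.
Import Order.TTheory GRing.Theory Num.Theory.
Local Open Scope ring_scope.

Section Exec.
Variables (R : realFieldType) (V E : finType) (ends : E -> V * V).
Variables (cV : V -> R) (cE : E -> R).
Local Notation st k := (rt_state_at ends cV cE k).
Local Notation mu k := (st k).1.
Local Notation Ep k := (st k).2.
Local Notation vs := (vsat ends cV).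

Lemma mu_step k e : mu k.+1 e =
  if e \in Ep k then mu k e + delta ends cV cE (mu k) (Ep k) else mu k e.
Proof.
rewrite /rt_state_at iterS; case: (iter k _ _) => m0 E0 /=.
case: eqP => [->|_] /=; first by rewrite in_set0.
by rewrite ffunE.
Qed.

Lemma Ep_step k : Ep k.+1 = [set e in Ep k | ~~ [|| vs (mu k.+1) (ends e).1,
   vs (mu k.+1) (ends e).2 | esat cE (mu k.+1) e]].
Proof.
rewrite /rt_state_at iterS; case: (iter k _ _) => m0 E0 /=.
case: eqP => [->|_] //=.
by apply/setP => e; rewrite !inE.
Qed.

Lemma Ep_sub k : Ep k.+1 \subset Ep k.
Proof. by rewrite Ep_step; apply/subsetP => e; rewrite inE => /andP[]. Qed.

Lemma Ep_subn k n : (k <= n)%N -> Ep n \subset Ep k.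
Proof.
elim: n => [|n IH]; first by rewrite leqn0 => /eqP->.
rewrite leq_eqVlt => /orP[/eqP->//|/IH]; apply: subset_trans; exact: Ep_sub.
Qed.

Lemma mu_stable k n e : (k <= n)%N -> e \notin Ep k -> mu n e = mu k e.
Proof.
move=> + He; elim: n => [|n IH]; first by rewrite leqn0 => /eqP->.
rewrite leq_eqVlt => /orP[/eqP->//|]; rewrite ltnS => Hkn.
rewrite mu_step IH //.
have /subsetP S := Ep_subn Hkn.
by case: ifP => // /S; rewrite (negbTE He).
Qed.

Lemma mu_unif k : exists L, forall e, e \in Ep k -> mu k e = L.
Proof.
elim: k => [|k [L HL]]; first by exists 0 => e _; rewrite /rt_state_at /= ffunE.
exists (L + delta ends cV cE (mu k) (Ep k)) => e He.
have /subsetP S := Ep_sub k.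
by rewrite mu_step (S _ He) HL // S.
Qed.

Lemma vsat_out k v e : vs (mu k.+1) v -> incident ends e v -> e \notin Ep k.+1.
Proof.
move=> Hv; rewrite /incident Ep_step inE => /orP[]/eqP Hev; rewrite negb_and;
  apply/orP; right; rewrite negbK Hev Hv //=.
by rewrite orbT.
Qed.

Lemma load_stable k n v : (k <= n)%N -> (forall e, incident ends e v -> e \notin Ep k) ->
  load ends (mu n) v = load ends (mu k) v.
Proof.
move=> Hkn H; apply: eq_bigr => e /H; exact: mu_stable.
Qed.


Lemma foldr_min_mem (x : R) s : foldr Order.min x s \in x :: s.
Proof.
elim: s => [|a s IH] /=; first by rewrite mem_seq1.
rewrite /Order.min; case: ifP => _; first by rewrite !inE eqxx orbT.
by move: IH; rewrite !inE => /orP[->|->]; rewrite ?orbT.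
Qed.

Lemma load_step k i : load ends (mu k.+1) i =
  load ends (mu k) i + delta ends cV cE (mu k) (Ep k) *+ degE ends (Ep k) i.
Proof.
rewrite /load /degE.
under eq_bigr do rewrite mu_step.
rewrite (eq_bigr (fun e => mu k e + (if e \in Ep k then delta ends cV cE (mu k) (Ep k) else 0))); last first.
  by move=> e _; case: ifP; rewrite ?addr0.
rewrite big_split /=; congr (_ + _).
rewrite -big_mkcondr /= -sumr_const; apply: eq_bigl => e; rewrite !inE andbC.
by [].
Qed.

Lemma step_removes k : Ep k != set0 -> exists2 e, e \in Ep k & e \notin Ep k.+1.
Proof.
move=> Hne.
set d := delta ends cV cE (mu k) (Ep k).
have Hd : d \in [seq cE e - mu k e | e in Ep k] ++
              [seq (cV i - load ends (mu k) i) / (degE ends (Ep k) i)%:R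
                 | i in [set i | (0 < degE ends (Ep k) i)%N]].
  rewrite /d /delta.
  set vals := (_ ++ _).
  have : vals != [::].
    rewrite /vals; case/set0Pn: Hne => e He.
    apply/eqP => /(congr1 size); rewrite size_cat size_map.
    have : (0 < size (enum (mem (Ep k))))%N.
      by rewrite -cardE; apply/card_gt0P; exists e.
    by case: (size (enum _)).
  case: vals => [//|a s] _.
  have := foldr_min_mem a (a :: s); rewrite /=.
  by rewrite !inE => /orP[/eqP->|]; rewrite ?eqxx.
move: Hd; rewrite mem_cat => /orP[] /imageP [x Hx Hdx].
- exists x => //.
  rewrite Ep_step inE negb_and negbK; apply/orP; right.
  rewrite /esat mu_step Hx -/d Hdx.
  by rewrite subrKC eqxx !orbT.
- move: Hx; rewrite inE => Hdeg.
  have Hsat : vsat ends cV (mu k.+1) x.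
    rewrite /vsat load_step -/d Hdx -[_ / _ *+ _]mulr_natr divfK ?subrKC //.
    by rewrite pnatr_eq0 -lt0n.
  move: Hdeg; rewrite /degE => /card_gt0P [e]; rewrite inE => /andP[He Hinc].
  by exists e => //; apply: vsat_out Hsat Hinc.
Qed.

Lemma card_Ep k : (#|Ep k| <= #|E| - k)%N.
Proof.
elim: k => [|k IH]; first by rewrite subn0 max_card.
have [H0|Hne] := eqVneq (Ep k) set0.
  have := Ep_sub k; rewrite H0 subset0 => /eqP->; by rewrite cards0.
have [e He He'] := step_removes Hne.
have Hp : Ep k.+1 \proper Ep k by apply/properP; split; [exact: Ep_sub|exists e].
have := proper_card Hp; move: IH; rewrite subnS.
case: (#|E| - k)%N => [|n] /=; first by rewrite leqn0 => /eqP->.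
by move=> H1 H2; rewrite -ltnS; apply: leq_trans H2 H1.
Qed.

Lemma Ep_final : Ep #|E| = set0.
Proof. by apply/eqP; rewrite -cards_eq0 -leqn0; have := card_Ep #|E|; rewrite subnn. Qed.


Definition arc_on e v := exists k, removed_at ends cV cE e k /\ vs (mu k.+1) v /\ incident ends e v.

Lemma removed_lt e k : removed_at ends cV cE e k -> (k < #|E|)%N.
Proof.
move=> [He _]; rewrite ltnNge; apply/negP => Hle.
have /subsetP S := Ep_subn Hle; have := S _ He; by rewrite Ep_final inE.
Qed.

Lemma arc_sat e v : arc_on e v -> vs (mu #|E|) v.
Proof.
move=> [k [Hr [Hv Hinc]]]; have Hk := removed_lt Hr.
rewrite /vsat (@load_stable k.+1) //; last by move=> f; apply: vsat_out Hv.
Qed.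

Lemma arc_same_k e f v k k' : removed_at ends cV cE e k -> vs (mu k.+1) v ->
  removed_at ends cV cE f k' -> incident ends f v -> (k' <= k)%N.
Proof.
move=> _ Hv [Hf _] Hinc; rewrite leqNgt; apply/negP => Hlt.
have /subsetP S := Ep_subn Hlt.
by have := vsat_out Hv Hinc; rewrite (S _ Hf).
Qed.

Lemma arc_unif e f v : arc_on e v -> arc_on f v -> mu #|E| e = mu #|E| f.
Proof.
move=> [k [Hr [Hv Hinc]]] [k' [Hr' [Hv' Hinc']]].
have Hkk : k = k'.
  by apply/eqP; rewrite eqn_leq (arc_same_k Hr' Hv' Hr Hinc) (arc_same_k Hr Hv Hr' Hinc').
subst k'.
have Hk := removed_lt Hr.
case: Hr => He He'; case: Hr' => Hf Hf'.
rewrite (@mu_stable k.+1 #|E| e) // (@mu_stable k.+1 #|E| f) //.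
have [L HL] := mu_unif k.
by rewrite !mu_step He Hf !HL.
Qed.

Lemma removed_exists e n : e \in Ep 0 -> e \notin Ep n -> exists k, removed_at ends cV cE e k.
Proof.
move=> H0; elim: n => [|n IH]; first by rewrite H0.
move=> Hn; case: (boolP (e \in Ep n)) => [Hin|/IH//].
by exists n.
Qed.

Lemma final_none e : 0 <= cE e -> ~ arc_on e (ends e).1 -> ~ arc_on e (ends e).2 ->
  mu #|E| e = cE e.
Proof.
move=> Hc N1 N2.
case: (boolP (e \in Ep 0)) => [H0|H0].
- have H1 : e \notin Ep #|E| by rewrite Ep_final inE.
  have [k Hr] := removed_exists H0 H1.
  have Hk := removed_lt Hr.
  case: (Hr) => He He'.
  move: (He'); rewrite Ep_step inE He /= negbK => /orP[Hs1|/orP[Hs2|Hes]].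
  + by exfalso; apply: N1; exists k; split => //; split => //; rewrite /incident eqxx.
  + by exfalso; apply: N2; exists k; split => //; split => //; rewrite /incident eqxx orbT.
  + by rewrite (@mu_stable k.+1 #|E| e) //; apply/eqP.
- rewrite (@mu_stable 0 #|E| e) //.
  move: H0; rewrite /rt_state_at /= inE ffunE -leNgt => Hle.
  by apply/eqP; rewrite eq_le Hle Hc.
Qed.

End Exec.

Lemma sum_const_le (R : realFieldType) (I : finType) (P : pred I) (x : R) (n : nat) :
  0 <= x -> (#|P| <= n)%N -> \sum_(i | P i) x <= x *+ n.
Proof.
move=> Hx Hn.
by rewrite sumr_const -(subnKC Hn) mulrnDr lerDl mulrn_wge0.
Qed.

Lemma mass (R : realFieldType) (V E : finType) (ends : E -> V * V)
  (tau : E -> option V) (muG muH : {ffun E -> R}) (cG cH : E -> R) (cV : V -> R) (st : E)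
  (Hinc : forall e v, tau e = Some v -> incident ends e v)
  (HN : forall e, tau e = None -> muG e = cG e /\ muH e = cH e)
  (Hdiff : forall e, e != st -> cG e = cH e)
  (Hunif : forall e f v, tau e = Some v -> tau f = Some v -> muG e = muG f /\ muH e = muH f)
  (Hsat : forall e v, tau e = Some v -> load ends muG v = cV v /\ load ends muH v = cV v) :
  \sum_i `|load ends muG i - load ends muH i| <= 2 * `|cG st - cH st|.
Proof.
pose D e := muG e - muH e.
have Hl i : load ends muG i - load ends muH i = \sum_(e | incident ends e i) D e.
  by rewrite /load -sumrB.
have Hi i : `|load ends muG i - load ends muH i| + \sum_(e | tau e == Some i) `|D e|
     <= \sum_(e | incident ends e i && (tau e != Some i)) `|D e|.
  have Hsplit : load ends muG i - load ends muH i =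
      \sum_(e | tau e == Some i) D e +
      \sum_(e | incident ends e i && (tau e != Some i)) D e.
    rewrite Hl (bigID (fun e => tau e == Some i)) /=; congr (_ + _).
    apply: eq_bigl => e; case: eqP => [/Hinc ->|] //; by rewrite andbF.
  rewrite Hsplit.
  case: (pickP (fun e => tau e == Some i)) => [e0 /eqP He0 | Hnone].
  - have Heq e : tau e == Some i -> D e = D e0.
      by move=> /eqP He; rewrite /D; case: (Hunif _ _ _ He He0) => -> ->.
    have [HG HH] := Hsat _ _ He0.
    have H0 : \sum_(e | tau e == Some i) D e +
              \sum_(e | incident ends e i && (tau e != Some i)) D e = 0.
      by rewrite -Hsplit HG HH subrr.
    rewrite H0 normr0 add0r.
    have -> : \sum_(e | tau e == Some i) `|D e| =
              `|\sum_(e | tau e == Some i) D e|.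
      transitivity (\sum_(e | tau e == Some i) `|D e0|).
        by apply: eq_bigr => e /Heq ->.
      transitivity (`|\sum_(e | tau e == Some i) D e0|).
        by rewrite !sumr_const normrMn.
      by congr `|_|; apply: eq_bigr => e /Heq ->.
    move/eqP: H0; rewrite addr_eq0 => /eqP ->; rewrite normrN.
    exact: ler_norm_sum.
  - rewrite [\sum_(e | tau e == Some i) D e]big_pred0 // [\sum_(e | tau e == Some i) `|D e|]big_pred0 // add0r addr0; exact: ler_norm_sum.
have Hsum := @ler_sum _ _ (index_enum V) xpredT _ _ (fun i _ => Hi i).
rewrite big_split /= in Hsum.
have E1 : \sum_i \sum_(e | tau e == Some i) `|D e| =
    \sum_e \sum_i (if tau e == Some i then `|D e| else 0).
  under eq_bigr => i _ do rewrite big_mkcond.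
  exact: exchange_big.
have E2 : \sum_i \sum_(e | incident ends e i && (tau e != Some i)) `|D e| =
    \sum_e \sum_i (if incident ends e i && (tau e != Some i) then `|D e| else 0).
  under eq_bigr => i _ do rewrite big_mkcond.
  exact: exchange_big.
rewrite E1 E2 in Hsum.
set W := \sum_e _ in Hsum.
have Hper e : \sum_i (if incident ends e i && (tau e != Some i) then `|D e| else 0)
   <= \sum_i (if tau e == Some i then `|D e| else 0) +
      (if e == st then 2 * `|cG st - cH st| else 0).
  rewrite -!big_mkcond /=.
  case Hte : (tau e) => [v|].
  - rewrite [X in _ <= X + _](eq_bigl (fun i => i == v)); last by move=> i /=; rewrite eq_sym.
    rewrite big_pred1_eq.
    apply: (@le_trans _ _ (`|D e| + 0)); last first.
      by rewrite lerD2l; case: ifP => //; rewrite mulr_ge0.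
    rewrite addr0 -[X in _ <= X]mulr1n; apply: sum_const_le => //.
    have := Hinc _ _ Hte; rewrite /incident => Hv.
    pose o := if v == (ends e).1 then (ends e).2 else (ends e).1.
    apply: leq_trans (_ : #|pred1 o| <= 1)%N; last by rewrite card1.
    apply: subset_leq_card; apply/subsetP => i; rewrite !inE /o.
    case/andP => /orP[] /eqP Hii Hne; move: Hne; rewrite -Hii.
    + move=> Hne; have {}Hne : v != (ends e).1 by apply: contra Hne => /eqP->.
      by rewrite (negbTE Hne) eqxx.
    + move=> Hne; have {}Hne : v != (ends e).2 by apply: contra Hne => /eqP->.
      case: ifP => [_|/negbT Hne1]; first by rewrite eqxx.
      by move: Hv; rewrite eq_sym (negbTE Hne1) eq_sym (negbTE Hne).
  - rewrite (eq_bigl (fun i => incident ends e i)); last by move=> i; rewrite andbT.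
    rewrite [\sum_(i | None == Some i) _]big_pred0 // add0r.
    have [HG HH] := HN _ Hte.
    case: eqP => [Est|/eqP Hne].
    + have -> : D e = cG st - cH st by rewrite /D HG HH Est.
      rewrite mulr_natl; apply: sum_const_le => //.
      apply: leq_trans (_ : #|[set (ends st).1; (ends st).2]| <= 2)%N; last first.
        by rewrite cards2; case: (_ != _).
      by apply: subset_leq_card; apply/subsetP => i; rewrite !inE /incident Est !(eq_sym i).
    + have -> : D e = 0 by rewrite /D HG HH Hdiff // subrr.
      by rewrite normr0 big1.
have Hs := @ler_sum _ _ (index_enum E) xpredT _ _ (fun e _ => Hper e).
rewrite big_split /= -/W -big_mkcond /= big_pred1_eq in Hs.
have := le_trans Hsum Hs.
by rewrite [W + _]addrC lerD2r.
Qed.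

From Stdlib Require ClassicalEpsilon.

Lemma dep_to_arc (R : realFieldType) (V E : finType) (ends : E -> V * V)
  (cV : V -> R) (cE : E -> R)
  (Hsimple : forall e f : E,
      ends e = ends f \/ ends e = ((ends f).2, (ends f).1) -> e = f)
  e u v : dep_arc ends cV cE u v -> (ends e = (v, u) \/ ends e = (u, v)) ->
  arc_on ends cV cE e v.
Proof.
move=> [f [k [Hr Hor]]] He.
have [Ef Hs] : ((ends f = (v, u)) \/ (ends f = (u, v))) /\
    vsat ends cV (rt_state_at ends cV cE k.+1).1 v.
  case: Hor => [[H2 [H1 Hs]]|[H1 [H2 Hs]]].
  - by split; [left; rewrite [ends f]surjective_pairing H1 H2 | rewrite -H1].
  - by split; [right; rewrite [ends f]surjective_pairing H1 H2 | rewrite -H2].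
have Hfe : e = f.
  apply: Hsimple; case: He => He; case: Ef => Ef; rewrite He Ef /=; by [left|right].
subst f; exists k; split => //; split => //.
by rewrite /incident; case: He => ->; rewrite eqxx ?orbT.
Qed.

Lemma arc_to_dep1 (R : realFieldType) (V E : finType) (ends : E -> V * V)
  (cV : V -> R) (cE : E -> R) e :
  arc_on ends cV cE e (ends e).1 -> dep_arc ends cV cE (ends e).2 (ends e).1.
Proof. by move=> [k [Hr [Hs _]]]; exists e, k; split => //; left. Qed.

Lemma arc_to_dep2 (R : realFieldType) (V E : finType) (ends : E -> V * V)
  (cV : V -> R) (cE : E -> R) e :
  arc_on ends cV cE e (ends e).2 -> dep_arc ends cV cE (ends e).1 (ends e).2.
Proof. by move=> [k [Hr [Hs _]]]; exists e, k; split => //; right. Qed.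

Theorem lemma24 (R : realFieldType) (V E : finType) (ends : E -> V * V)
  (cV : V -> R) (cEG cEH : E -> R) (st : E)
  (* (V,E) is a graph: no parallel edges (self-loops allowed) *)
  (Hsimple : forall e f : E,
      ends e = ends f \/ ends e = ((ends f).2, (ends f).1) -> e = f)
  (HcV : forall i, 0 <= cV i)
  (HcEG : forall e, 0 <= cEG e) (HcEH : forall e, 0 <= cEH e)
  (* G and H differ only in the capacity of the edge st = (s,t) *)
  (Hdiff : forall e, e != st -> cEG e = cEH e)
  (* no two vertices become saturated simultaneously *)
  (HsimG : forall (i j : V) (k : nat), i != j ->
      becomes_sat ends cV cEG i k -> becomes_sat ends cV cEG j k -> False)
  (HsimH : forall (i j : V) (k : nat), i != j ->
      becomes_sat ends cV cEH i k -> becomes_sat ends cV cEH j k -> False)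
  (* D_G = D_H *)
  (HD : forall u v : V, dep_arc ends cV cEG u v <-> dep_arc ends cV cEH u v) :
  \sum_(i : V) `| (cV i - load ends (rising_tide ends cV cEG) i)
                 - (cV i - load ends (rising_tide ends cV cEH) i) |
    <= 2 * `| cEG st - cEH st |.
Proof.
pose tau e := if ClassicalEpsilon.excluded_middle_informative
                   (dep_arc ends cV cEG (ends e).2 (ends e).1) then Some (ends e).1
              else if ClassicalEpsilon.excluded_middle_informative
                   (dep_arc ends cV cEG (ends e).1 (ends e).2) then Some (ends e).2
              else None.
have Harc : forall cE, (forall u v, dep_arc ends cV cEG u v <-> dep_arc ends cV cE u v) ->
    forall e v, tau e = Some v -> arc_on ends cV cE e v.
  move=> cE HX e v; rewrite /tau.
  case: ClassicalEpsilon.excluded_middle_informative => [d1|n1].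
    move=> [<-]; apply: (dep_to_arc Hsimple (u := (ends e).2)); first exact/HX.
    by left; rewrite [ends e]surjective_pairing.
  case: ClassicalEpsilon.excluded_middle_informative => [d2|n2] //.
  move=> [<-]; apply: (dep_to_arc Hsimple (u := (ends e).1)); first exact/HX.
  by right; rewrite [ends e]surjective_pairing.
have Hnone : forall cE, (forall u v, dep_arc ends cV cEG u v <-> dep_arc ends cV cE u v) ->
    (forall e, 0 <= cE e) ->
    forall e, tau e = None -> rising_tide ends cV cE e = cE e.
  move=> cE HX Hc e; rewrite /tau.
  case: ClassicalEpsilon.excluded_middle_informative => [d1|n1] //.
  case: ClassicalEpsilon.excluded_middle_informative => [d2|n2] // _.
  apply: final_none => //.
  - by move=> /arc_to_dep1 /HX.
  - by move=> /arc_to_dep2 /HX.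
have HXG : forall u v, dep_arc ends cV cEG u v <-> dep_arc ends cV cEG u v by [].
have Hm := @mass R V E ends tau (rising_tide ends cV cEG) (rising_tide ends cV cEH)
  cEG cEH cV st.
have -> : \sum_(i : V) `| (cV i - load ends (rising_tide ends cV cEG) i)
                 - (cV i - load ends (rising_tide ends cV cEH) i) | =
   \sum_i `|load ends (rising_tide ends cV cEG) i - load ends (rising_tide ends cV cEH) i|.
  apply: eq_bigr => i _; rewrite opprB addrC addrA subrK distrC //.
apply: Hm => //.
- move=> e v; rewrite /tau.
  case: ClassicalEpsilon.excluded_middle_informative => [d1|n1].
    by move=> [<-]; rewrite /incident eqxx.
  case: ClassicalEpsilon.excluded_middle_informative => [d2|n2] //.
  by move=> [<-]; rewrite /incident eqxx orbT.
- by move=> e He; split; [apply: Hnone HXG HcEG e He | apply: Hnone HD HcEH e He].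
- move=> e f v He Hf; split; apply: arc_unif.
  + exact: Harc HXG e v He.
  + exact: Harc HXG f v Hf.
  + exact: Harc HD e v He.
  + exact: Harc HD f v Hf.
- move=> e v He; split; apply/eqP; apply: arc_sat.
  + exact: Harc HXG e v He.
  + exact: Harc HD e v He.
Qed.
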